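(* For $m\ge1$, $\widetilde G_{m,1}=G_{m,1}=(-1)^{m-1}/m$, and \[ \sum_{m\ge1}\sum_{n\ge1}\widetilde G_{m,n+1}x^my^n=\frac{y\log(1+x)-x\log(1+y)}{\log(1+x)-\log(1+y)}\left(\frac{y\log(1+x)+x\log(1+y)}{xy}-1\right). \] Consequently $\widetilde G_{m,n}=\widetilde G_{n-1,m+1}$ for all $m\ge1$, $n\ge2$.
   Context: The generalized Gregory coefficients $G_{m,n}$ ($m,n\ge0$) are defined by $\sum_{m,n\ge0}G_{m,n}x^my^n=\dfrac{y\log^2(1+x)-x\log^2(1+y)}{\log(1+x)-\log(1+y)}$ as formal power series, where $\log^k u=(\log u)^k$. For $m,n\ge1$ define $\widetilde G_{m,n}=G_{m,n}+\sum_{j=0}^{m-2}G_{n-1,j+2}\,G_{m-j-1,2}$ (the sum is empty for $m=1$, so $\widetilde G_{1,n}=G_{1,n}$). *)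

(* Defs.v *)
(* Bivariate formal power series over rat, represented
   by their coefficient functions (i,j) |-> coefficient of x^i y^j. *)
From HB Require Import structures.
From mathcomp Require Import all_boot all_order all_algebra.
Set Implicit Arguments. Unset Strict Implicit. Unset Printing Implicit Defensive.
Import Order.TTheory GRing.Theory Num.Theory.
Local Open Scope ring_scope.

Definition ps := nat -> nat -> rat.

Definition peq (F H : ps) : Prop := forall i j, F i j = H i j.

Definition padd (F H : ps) : ps := fun i j => F i j + H i j.
Definition psub (F H : ps) : ps := fun i j => F i j - H i j.
Definition pmul (F H : ps) : ps := fun i j =>
  \sum_(a < i.+1) \sum_(b < j.+1) F a b * H (i - a)%N (j - b)%N.

Definition pone : ps := fun i j => if (i == 0%N) && (j == 0%N) then 1 else 0.
Definition px : ps := fun i j => if (i == 1%N) && (j == 0%N) then 1 else 0.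
Definition py : ps := fun i j => if (i == 0%N) && (j == 1%N) then 1 else 0.

(* coefficients of log(1+t) = sum_{k>=1} (-1)^(k-1) t^k / k *)
Definition lcoef (k : nat) : rat :=
  if k is 0%N then 0 else (-1) ^+ k.-1 / k%:R.
Definition logx : ps := fun i j => if j == 0%N then lcoef i else 0.
Definition logy : ps := fun i j => if i == 0%N then lcoef j else 0.

Definition gregD : ps := psub logx logy.
Definition gregN : ps := psub (pmul py (pmul logx logx)) (pmul px (pmul logy logy)).
Definition numA : ps := psub (pmul py logx) (pmul px logy).
Definition numB : ps := padd (pmul py logx) (pmul px logy).

Definition Gtilde (G : ps) (m n : nat) : rat :=
  G m n + \sum_(0 <= j < m - 1) G (n - 1)%N (j + 2)%N * G (m - j - 1)%N 2%N.

(* Main.v *)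
Require Import Defs.
From HB Require Import structures.
From mathcomp Require Import all_boot all_order all_algebra.
From mathcomp Require Import zify.
From Stdlib Require Import FunctionalExtensionality Ring.
Import Order.TTheory GRing.Theory Num.Theory.
Local Open Scope ring_scope.

Lemma ps_ext (F H : ps) : (forall i j, F i j = H i j) -> F = H.
Proof. move=> E; apply: functional_extensionality => i; apply: functional_extensionality => j; exact: E. Qed.

Lemma sum_delta n k (f : nat -> rat) :
  \sum_(a < n) (if (a == k :> nat) then f a else 0) = if (k < n)%N then f k else 0.
Proof.
elim: n => [|n IH]; first by rewrite big_ord0.
rewrite big_ord_recr /= IH.
case: (ltngtP k n) => [lt|gt|->].
- have -> : (k < n.+1)%N by lia. by rewrite addr0.
- have -> : (k < n.+1)%N = false by lia. by rewrite addr0.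
- have -> : (n < n.+1)%N by lia. by rewrite add0r.
Qed.

Lemma tri (P : nat -> nat -> rat) i :
  \sum_(a < i.+1) \sum_(c < a.+1) P c a = \sum_(c < i.+1) \sum_(e < (i - c).+1) P c (c + e)%N.
Proof.
elim: i => [|i IH].
  by rewrite !big_ord_recr !big_ord0 /= !add0r.
rewrite big_ord_recr /= IH [RHS]big_ord_recr /= subnn big_ord1 addn0.
rewrite [\sum_(c < i.+2) _]big_ord_recr /= addrA; congr (_ + _).
rewrite -big_split /=.
apply: eq_bigr => c _.
have hc : (c <= i)%N by rewrite -ltnS ltn_ord.
rewrite subSn // [RHS]big_ord_recr /=; congr (_ + _); congr (P _ _); lia.
Qed.

Definition pzero : ps := fun _ _ => 0.
Definition popp (F : ps) : ps := fun i j => - F i j.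

Lemma pmulC F H : pmul F H = pmul H F.
Proof.
apply: ps_ext => i j; rewrite /pmul.
rewrite (reindex_inj rev_ord_inj) /=; apply: eq_bigr => a _.
rewrite (reindex_inj rev_ord_inj) /=; apply: eq_bigr => b _.
rewrite mulrC; have ha := ltn_ord a; have hb := ltn_ord b.
by f_equal; f_equal; lia.
Qed.

Lemma pmulA F G H : pmul F (pmul G H) = pmul (pmul F G) H.
Proof.
apply: ps_ext => i j; rewrite /pmul.
transitivity (\sum_(c < i.+1) \sum_(e < (i - c).+1) \sum_(d < j.+1) \sum_(f < (j - d).+1)
   F c d * G e f * H (i - c - e)%N (j - d - f)%N).
  apply: eq_bigr => c _.
  rewrite (eq_bigr (fun d : 'I_j.+1 => \sum_(e < (i - c).+1) \sum_(f < (j - d).+1)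
      F c d * G e f * H (i - c - e)%N (j - d - f)%N)); last first.
    move=> d _; rewrite mulr_sumr; apply: eq_bigr => e _; rewrite mulr_sumr.
    by apply: eq_bigr => f _; rewrite mulrA.
  by rewrite exchange_big.
symmetry.
transitivity (\sum_(a < i.+1) \sum_(c < a.+1) \sum_(b < j.+1) \sum_(d < b.+1)
   F c d * G (a - c)%N (b - d)%N * H (i - a)%N (j - b)%N).
  apply: eq_bigr => a _.
  rewrite (eq_bigr (fun b : 'I_j.+1 => \sum_(c < a.+1) \sum_(d < b.+1)
      F c d * G (a - c)%N (b - d)%N * H (i - a)%N (j - b)%N)); last first.
    move=> b _; rewrite mulr_suml; apply: eq_bigr => c _; rewrite mulr_suml.
    by [].
  by rewrite exchange_big.
etransitivity; first exact: (tri (fun c a => \sum_(b < j.+1) \sum_(d < b.+1)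
   F c d * G (a - c)%N (b - d)%N * H (i - a)%N (j - b)%N) i).
apply: eq_bigr => c _; apply: eq_bigr => e _ /=.
transitivity (\sum_(b < j.+1) \sum_(d < b.+1) F c d * G e (b - d)%N * H (i - c - e)%N (j - b)%N).
  apply: eq_bigr => b _; apply: eq_bigr => d _.
  by f_equal; [f_equal|]; f_equal; lia.
etransitivity; first exact: (tri (fun d b => F c d * G e (b - d)%N * H (i - c - e)%N (j - b)%N) j).
apply: eq_bigr => d _; apply: eq_bigr => f _ /=.
by f_equal; [f_equal|]; f_equal; lia.
Qed.

Lemma sum2_delta i j k l (X : nat -> nat -> rat) :
  \sum_(a < i.+1) \sum_(b < j.+1) (if (a == k :> nat) && (b == l :> nat) then 1 else 0) * X a b
  = if (k <= i)%N && (l <= j)%N then X k l else 0.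
Proof.
transitivity (\sum_(a < i.+1) (if (a == k :> nat) then (if (l <= j)%N then X a l else 0) else 0)).
  apply: eq_bigr => a _.
  transitivity (\sum_(b < j.+1) (if (b == l :> nat) then (if (a == k :> nat) then X a b else 0) else 0)).
    by apply: eq_bigr => b _; case: (a == k :> nat); case: (b == l :> nat); rewrite /= ?mul1r ?mul0r.
  by rewrite (sum_delta j.+1 l (fun b => if (a == k :> nat) then X a b else 0)) ltnS; case: (a == k :> nat); case: (l <= j)%N.
rewrite (sum_delta (i.+1) k (fun a => if (l <= j)%N then X a l else 0)) ltnS.
by case: (k <= i)%N; case: (l <= j)%N.
Qed.

Lemma pmul1 F : pmul pone F = F.
Proof.
apply: ps_ext => i j; rewrite /pmul /pone.
rewrite (sum2_delta i j 0 0 (fun a b => F (i - a)%N (j - b)%N)) /=.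
by rewrite !subn0.
Qed.

Lemma pmulxE F i j : pmul px F i j = if i is i'.+1 then F i' j else 0.
Proof.
rewrite /pmul /px (sum2_delta i j 1 0 (fun a b => F (i - a)%N (j - b)%N)) /=.
by case: i => [|i] //=; rewrite subn0 subn1.
Qed.

Lemma pmulyE F i j : pmul py F i j = if j is j'.+1 then F i j' else 0.
Proof.
rewrite /pmul /py (sum2_delta i j 0 1 (fun a b => F (i - a)%N (j - b)%N)) /=.
by case: j => [|j] //=; rewrite subn0 subn1.
Qed.

Lemma pmulDl F G H : pmul (padd F G) H = padd (pmul F H) (pmul G H).
Proof.
apply: ps_ext => i j; rewrite /pmul /padd -big_split /=; apply: eq_bigr => a _.
by rewrite -big_split /=; apply: eq_bigr => b _; rewrite mulrDl.
Qed.

Lemma ps_ring : ring_theory pzero pone padd pmul psub popp eq.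
Proof.
split.
- by move=> F; apply: ps_ext => i j; rewrite /padd /pzero add0r.
- by move=> F G; apply: ps_ext => i j; rewrite /padd addrC.
- by move=> F G H; apply: ps_ext => i j; rewrite /padd addrA.
- exact: pmul1.
- exact: pmulC.
- exact: pmulA.
- exact: pmulDl.
- by [].
- by move=> F; apply: ps_ext => i j; rewrite /padd /popp /pzero subrr.
Qed.

Add Ring psR : ps_ring.


Lemma peqE F H : peq F H -> F = H.
Proof. exact: ps_ext. Qed.

Lemma peq_of_eq F H : F = H -> peq F H.
Proof. by move=> ->. Qed.

Lemma psub_ev A B i j : psub A B i j = A i j - B i j. Proof. by []. Qed.
Lemma padd_ev A B i j : padd A B i j = A i j + B i j. Proof. by []. Qed.

Lemma eq_of_sub0 F H : psub F H = pzero -> F = H.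
Proof. move=> E; transitivity (padd H (psub F H)); first ring. rewrite E; ring. Qed.

Lemma cancel_x F H : pmul px F = pmul px H -> F = H.
Proof.
move=> E; apply: ps_ext => i j.
by have := congr1 (fun P => P i.+1 j) E; rewrite !pmulxE.
Qed.

Lemma cancel_y F H : pmul py F = pmul py H -> F = H.
Proof.
move=> E; apply: ps_ext => i j.
by have := congr1 (fun P => P i j.+1) E; rewrite !pmulyE.
Qed.

Lemma cancel_xmy F H : pmul (psub px py) F = pmul (psub px py) H -> F = H.
Proof.
move=> E; apply: eq_of_sub0.
set Z := psub F H.
have EZ : psub (pmul px Z) (pmul py Z) = pzero.
  transitivity (psub (pmul (psub px py) F) (pmul (psub px py) H)); first by rewrite /Z; ring.
  rewrite E; ring.
have ev : forall i j, pmul px Z i j = pmul py Z i j.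
  move=> i j; apply/eqP; rewrite -subr_eq0; apply/eqP.
  by have := congr1 (fun P => P i j) EZ.
have Z0 : forall i j, Z i j = 0.
  elim=> [|i IH] j.
    by move: (ev 0%N j.+1); rewrite pmulxE pmulyE => h; rewrite -h.
  by move: (ev i.+1 j.+1); rewrite pmulxE pmulyE IH => h; rewrite -h.
by apply: ps_ext => i j; rewrite Z0.
Qed.

Fixpoint pexp (E : ps) (k : nat) : ps := if k is k'.+1 then pmul E (pexp E k') else pone.

Lemma pexp_low (E : ps) : E 0%N 0%N = 0 -> forall k i j, (i + j < k)%N -> pexp E k i j = 0.
Proof.
move=> E0; elim=> [|k IH] i j //= hk.
rewrite /pmul big1 // => a _; rewrite big1 // => b _.
case: (boolP ((a == 0 :> nat) && (b == 0 :> nat))) => [/andP[/eqP a0 /eqP b0]|nab].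
  by rewrite a0 b0 E0 mul0r.
rewrite IH ?mulr0 //.
have ha := ltn_ord a; have hb := ltn_ord b.
move: nab; rewrite negb_and => /orP[] /eqP ?; lia.
Qed.

Definition psums (E : ps) (n : nat) : ps := fun i j => \sum_(k < n.+1) pexp E k i j.
Definition pinv (K : ps) : ps := fun i j => psums (psub pone K) (i + j) i j.

Lemma psums_S E n : psums E n.+1 = padd (psums E n) (pexp E n.+1).
Proof. by apply: ps_ext => i j; rewrite /psums /padd big_ord_recr. Qed.

Lemma psums_stable (E : ps) p q n : E 0%N 0%N = 0 -> (p + q <= n)%N -> psums E n p q = psums E (p + q) p q.
Proof.
move=> E0; elim: n => [|n IH] h.
  by have -> : (p + q = 0)%N by lia.
case: (ltngtP (p + q) n.+1) => [lt|gt|->] //; last by lia.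
rewrite psums_S padd_ev pexp_low // addr0 IH //.
Qed.

Lemma geo E n : pmul (psub pone E) (psums E n) = psub pone (pexp E n.+1).
Proof.
elim: n => [|n IH].
  have -> : psums E 0 = pone by apply: ps_ext => i j; rewrite /psums big_ord1.
  simpl; ring.
rewrite psums_S.
transitivity (padd (pmul (psub pone E) (psums E n)) (pmul (psub pone E) (pexp E n.+1))); first ring.
rewrite IH /=; ring.
Qed.

Lemma pinvP (K : ps) : K 0%N 0%N = 1 -> pmul K (pinv K) = pone.
Proof.
move=> K1; set E := psub pone K.
have E0 : E 0%N 0%N = 0 by rewrite /E psub_ev K1 /pone /= subrr.
have KE : K = psub pone E by rewrite /E; ring.
apply: ps_ext => i j.
transitivity (pmul K (psums E (i + j)) i j).
  rewrite /pmul; apply: eq_bigr => a _; apply: eq_bigr => b _.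
  rewrite /pinv -/E -(@psums_stable E _ _ (i + j)%N E0) //.
  have ha := ltn_ord a; have hb := ltn_ord b; lia.
rewrite {1}KE geo psub_ev pexp_low ?subr0 //; lia.
Qed.

Lemma cancel_unit (K F H : ps) : K 0%N 0%N = 1 -> pmul F K = pmul H K -> F = H.
Proof.
move=> K1 E.
have -> : F = pmul (pmul F K) (pinv K) by rewrite -pmulA pinvP //; ring.
rewrite E -pmulA pinvP //; ring.
Qed.

Definition psw (F : ps) : ps := fun i j => F j i.

Lemma psw_mul F H : psw (pmul F H) = pmul (psw F) (psw H).
Proof. by apply: ps_ext => i j; rewrite /psw /pmul exchange_big. Qed.
Lemma psw_sub F H : psw (psub F H) = psub (psw F) (psw H). Proof. by []. Qed.
Lemma psw_add F H : psw (padd F H) = padd (psw F) (psw H). Proof. by []. Qed.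
Lemma psw_x : psw px = py.
Proof. by apply: ps_ext => i j; rewrite /psw /px /py andbC. Qed.
Lemma psw_y : psw py = px.
Proof. by apply: ps_ext => i j; rewrite /psw /px /py andbC. Qed.
Lemma psw_logx : psw logx = logy. Proof. by []. Qed.
Lemma psw_logy : psw logy = logx. Proof. by []. Qed.
Lemma psw_one : psw pone = pone.
Proof. by apply: ps_ext => i j; rewrite /psw /pone andbC. Qed.

Definition xo (K : ps) := forall i j, (0 < j)%N -> K i j = 0.

Lemma xo_mul F H : xo F -> xo H -> xo (pmul F H).
Proof.
move=> hF hH i j hj; rewrite /pmul big1 // => a _; rewrite big1 // => b _.
case: (posnP b) => [b0|bp]; last by rewrite hF // mul0r.
by rewrite hH ?mulr0 // b0 subn0.
Qed.

Lemma xo_x : xo px. Proof. by move=> i [|j] //; rewrite /px andbF. Qed.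

Definition lx : ps := fun i j => if j == 0%N then lcoef i.+1 else 0.
Definition ly : ps := psw lx.
Lemma xo_lx : xo lx. Proof. by move=> i [|j]. Qed.
Lemma xo_logx : xo logx. Proof. by move=> i [|j]. Qed.

Lemma Lx_eq : logx = pmul px lx.
Proof. by apply: ps_ext => i j; rewrite pmulxE /logx /lx; case: i => [|i] //; case: (j == 0%N). Qed.
Lemma Ly_eq : logy = pmul py ly.
Proof. by rewrite -psw_logx Lx_eq psw_mul psw_x. Qed.

Definition Qf (K : ps) : ps := fun i j => K (i + j + 1)%N 0%N.

Lemma pmul_subl A B Z : pmul (psub A B) Z = psub (pmul A Z) (pmul B Z).
Proof. ring. Qed.

Lemma diff_factor K : xo K -> psub K (psw K) = pmul (psub px py) (Qf K).
Proof.
move=> hK; apply: ps_ext => [[|i] [|j]];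
rewrite pmul_subl !psub_ev pmulxE pmulyE /psw /Qf.
- by rewrite !subrr.
- rewrite (hK 0%N _ (ltn0Sn _)). have -> : (0 + j + 1 = j.+1)%N by lia. done.
- rewrite (hK 0%N _ (ltn0Sn _)). have -> : (i + 0 + 1 = i.+1)%N by lia. done.
- rewrite (hK _ _ (ltn0Sn _)) (hK _ _ (ltn0Sn _)). have -> : (i + j.+1 + 1 = i.+1 + j + 1)%N by lia. by rewrite !subrr.

Qed.

Definition Q : ps := Qf logx.
Lemma Q00 : Q 0%N 0%N = 1. Proof. by rewrite /Q /Qf /logx /= /lcoef /= expr0 div1r invr1. Qed.
Lemma lx00 : lx 0%N 0%N = 1. Proof. by rewrite /lx /= /lcoef /= expr0 div1r invr1. Qed.

Lemma D_eq : gregD = pmul (psub px py) Q.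
Proof. by rewrite /gregD -psw_logx diff_factor //; exact: xo_logx. Qed.

Lemma cancel_D F H : pmul F gregD = pmul H gregD -> F = H.
Proof.
rewrite D_eq => E; apply: cancel_xmy; apply: (@cancel_unit Q _ _ Q00).
transitivity (pmul F (pmul (psub px py) Q)); [ring | rewrite E; ring].
Qed.

Lemma cancel_Lx F H : pmul F logx = pmul H logx -> F = H.
Proof.
rewrite Lx_eq => E; apply: cancel_x; apply: (@cancel_unit lx _ _ lx00).
transitivity (pmul F (pmul px lx)); [ring | rewrite E; ring].
Qed.

Lemma C_ex : exists C : ps, peq (pmul (pmul px py) C) numB.
Proof.
exists (padd lx ly); apply: peq_of_eq.
rewrite /numB Lx_eq Ly_eq; ring.
Qed.

Lemma A_ex : exists A : ps, peq (pmul A gregD) numA.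
Proof.
exists (pmul (pmul px py) (pmul (Qf lx) (pinv Q))); apply: peq_of_eq.
rewrite D_eq.
transitivity (pmul (pmul px py) (pmul (pmul (psub px py) (Qf lx)) (pmul Q (pinv Q)))); first ring.
rewrite pinvP; last exact: Q00.
rewrite -diff_factor; last exact: xo_lx.
rewrite /numA Lx_eq Ly_eq /ly; ring.
Qed.

Lemma G_ex : exists G : ps, peq (pmul G gregD) gregN.
Proof.
set Kg := pmul px (pmul lx lx).
exists (pmul (pmul px py) (pmul (Qf Kg) (pinv Q))); apply: peq_of_eq.
rewrite D_eq.
transitivity (pmul (pmul px py) (pmul (pmul (psub px py) (Qf Kg)) (pmul Q (pinv Q)))); first ring.
rewrite pinvP; last exact: Q00.
rewrite -diff_factor; last by apply: xo_mul; [exact: xo_x | apply: xo_mul; exact: xo_lx].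
rewrite /Kg !psw_mul psw_x /gregN Lx_eq Ly_eq /ly; ring.
Qed.

Definition ev0 (F : ps) : ps := fun i j => if j == 0%N then F i 0%N else 0.
Definition dy (F : ps) : ps := fun i j => F i j.+1.

Lemma decomp_y F : F = padd (ev0 F) (pmul py (dy F)).
Proof.
apply: ps_ext => i [|j]; rewrite padd_ev pmulyE /ev0 /dy /=; first by rewrite addr0.
by rewrite add0r.
Qed.

Lemma ev0_mul F H : ev0 (pmul F H) = pmul (ev0 F) (ev0 H).
Proof.
apply: ps_ext => i j; rewrite /ev0 /pmul.
case: j => [|j] /=.
  apply: eq_bigr => a _; rewrite !big_ord1 /=; by [].
symmetry; rewrite big1 // => a _; rewrite big1 // => b _.
case: (eqVneq (b : nat) 0%N) => [b0|bn]; last by rewrite mul0r.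
by rewrite b0 subn0 /= mulr0.
Qed.

Lemma ev0_add F H : ev0 (padd F H) = padd (ev0 F) (ev0 H).
Proof. by apply: ps_ext => i [|j]; rewrite /ev0 /padd //= addr0. Qed.
Lemma ev0_sub F H : ev0 (psub F H) = psub (ev0 F) (ev0 H).
Proof. by apply: ps_ext => i [|j]; rewrite /ev0 /psub //= subr0. Qed.
Lemma ev0_xo K : xo K -> ev0 K = K.
Proof. by move=> hK; apply: ps_ext => i [|j] //=; rewrite hK. Qed.
Lemma ev0_x : ev0 px = px. Proof. exact: ev0_xo xo_x. Qed.
Lemma ev0_logx : ev0 logx = logx. Proof. exact: ev0_xo xo_logx. Qed.
Lemma ev0_one : ev0 pone = pone.
Proof. by apply: ps_ext => [[|i] [|j]]. Qed.
Lemma ev0_y : ev0 py = pzero.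
Proof. by apply: ps_ext => [[|i] [|[|j]]]. Qed.
Lemma ev0_logy : ev0 logy = pzero.
Proof. by apply: ps_ext => [[|i] [|j]]. Qed.
Lemma ev0_ly : ev0 ly = pone.
Proof. apply: ps_ext => [[|i] [|j]] //=; by rewrite /ly /psw /lx /= /lcoef /= expr0 div1r invr1. Qed.
Lemma ev0_zero : ev0 pzero = pzero.
Proof. by apply: ps_ext => i [|j]. Qed.

Definition ev0E := (ev0_mul, ev0_add, ev0_sub, ev0_x, ev0_logx, ev0_one, ev0_y, ev0_logy, ev0_ly, ev0_zero).

Section Gfacts.
Variable G : ps.
Hypothesis hG : pmul G gregD = gregN.

Lemma G_sym : psw G = G.
Proof.
apply: cancel_D; rewrite hG.
have sD : psw gregD = psub logy logx by [].
transitivity (psub pzero (pmul (psw G) (psw gregD))); first by rewrite sD /gregD; ring.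
rewrite -psw_mul hG /gregN psw_sub !psw_mul psw_x psw_y psw_logx psw_logy; ring.
Qed.

Lemma G_row0 : ev0 G = pzero.
Proof.
apply: cancel_Lx.
have := congr1 ev0 hG; rewrite /gregN /gregD !ev0E => E.
transitivity (pmul (ev0 G) (psub logx pzero)); first ring.
rewrite E; ring.
Qed.

Lemma G_i0 i : G i 0%N = 0.
Proof. by have := congr1 (fun P => P i 0%N) G_row0. Qed.

Lemma G_0j j : G 0%N j = 0.
Proof. by rewrite -G_sym /psw G_i0. Qed.

Definition G1 := dy G.
Definition G2 := dy G1.

Lemma G_eq1 : G = pmul py G1.
Proof. rewrite {1}(decomp_y G) G_row0 /G1. ring. Qed.

Lemma G1D : pmul G1 gregD = psub (pmul logx logx) (pmul px (pmul py (pmul ly ly))).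
Proof.
apply: cancel_y.
transitivity (pmul G gregD); first by rewrite G_eq1; ring.
by rewrite hG /gregN Ly_eq; ring.
Qed.

Lemma G1_row0 : ev0 G1 = logx.
Proof.
apply: cancel_Lx.
have := congr1 ev0 G1D; rewrite /gregD !ev0E => E.
transitivity (pmul (ev0 G1) (psub logx pzero)); first ring.
rewrite E; ring.
Qed.

Lemma G_i1 i : G i 1%N = lcoef i.
Proof. by have := congr1 (fun P => P i 0%N) G1_row0. Qed.

Lemma dD_row0 : ev0 (dy gregD) = psub pzero pone.
Proof. by apply: ps_ext => [[|i] [|j]] //=; rewrite /gregD /psub /logx /logy /= /lcoef /= expr0 div1r invr1. Qed.

Lemma ev0_D : ev0 gregD = logx.
Proof. rewrite /gregD ev0_sub ev0_logx ev0_logy; ring. Qed.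

Lemma G2_row0 : pmul (ev0 G2) logx = psub logx px.
Proof.
set dD := dy gregD.
have eD : gregD = padd logx (pmul py (padd (psub pzero pone) (pmul py (dy dD)))).
  by rewrite {1}(decomp_y gregD) -/dD {1}(decomp_y dD) dD_row0 ev0_D.
have eG1 : G1 = padd logx (pmul py G2).
  by rewrite {1}(decomp_y G1) G1_row0.
have E := G1D; rewrite {1}eD eG1 in E.
have E2 : pmul py (padd (padd (psub pzero logx) (pmul py (pmul logx (dy dD))))
               (padd (pmul G2 logx) (pmul py (pmul G2 (padd (psub pzero pone) (pmul py (dy dD)))))))
        = pmul py (psub pzero (pmul px (pmul ly ly))).
  transitivity (psub (pmul (padd logx (pmul py G2)) (padd logx (pmul py (padd (psub pzero pone) (pmul py (dy dD)))))) (pmul logx logx)); first ring.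
  rewrite E; ring.
have := congr1 ev0 (@cancel_y _ _ E2); rewrite !ev0E => E3.
match type of E3 with ?L = ?R => transitivity (padd L logx); first ring end.
rewrite E3; ring.
Qed.


Lemma G_1j j : G 1%N j = lcoef j.
Proof. by rewrite -G_sym /psw G_i1. Qed.

Definition U : ps := fun m n => if (1 <= m)%N && (1 <= n)%N then G m n.+1 else 0.
Definition Sp : ps := fun a n => if (1 <= a)%N && (1 <= n)%N then G a.+1 n else 0.
Definition g2 : ps := ev0 G2.
Definition T : ps := fun m n => if (1 <= m)%N && (1 <= n)%N then Gtilde G m n.+1 else 0.

Lemma yU : pmul py U = psub G (pmul py logx).
Proof.
apply: ps_ext => m [|n]; rewrite psub_ev !pmulyE.
  by rewrite G_i0 subr0.
rewrite /U /logx; case: m => [|m].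
  by rewrite G_0j /lcoef; case: (n == 0%N); rewrite subr0.
case: n => [|n] /=; first by rewrite G_i1 subrr.
by rewrite subr0.
Qed.

Lemma xS : pmul px Sp = psub G (pmul px logy).
Proof.
apply: ps_ext => [[|m] n]; rewrite psub_ev !pmulxE.
  by rewrite G_0j subr0.
rewrite /Sp /logy; case: n => [|n].
  by rewrite G_i0 andbF /= /lcoef /=; case: (m == 0%N); rewrite subr0.
case: m => [|m] /=; first by rewrite G_1j subrr.
by rewrite subr0.
Qed.

Lemma g2L : pmul g2 logx = psub logx px.
Proof. exact: G2_row0. Qed.

Lemma Spg2 m n : pmul Sp g2 m n = \sum_(a < m.+1) Sp a n * G (m - a)%N 2%N.
Proof.
rewrite /pmul; apply: eq_bigr => a _.
rewrite big_ord_recr /= subnn big1 ?add0r //.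
move=> b _; rewrite /g2 /ev0.
have hb := ltn_ord b.
have -> : ((n - b)%N == 0%N) = false by apply/eqP; lia.
by rewrite mulr0.
Qed.

Lemma TUV : T = padd U (pmul Sp g2).
Proof.
apply: ps_ext => m n; rewrite padd_ev Spg2 /T /U.
case: m => [|m].
  by rewrite big_ord1 /Sp /= mul0r addr0.
case: n => [|n].
  by rewrite /= add0r big1 // => a _; rewrite /Sp andbF mul0r.
rewrite /= /Gtilde; congr (_ + _).
rewrite big_ord_recl /Sp /= mul0r add0r.
rewrite big_ord_recr /= subnn G_0j mulr0 addr0.
rewrite subn1 /= big_mkord; apply: eq_bigr => j _.
rewrite -{1}G_sym /psw subn1 /=.
have hj := ltn_ord j.
rewrite /bump /= add1n. by f_equal; f_equal; lia.
Qed.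


Lemma T_eq A C : pmul A gregD = numA -> pmul (pmul px py) C = numB ->
  T = pmul A (psub C pone).
Proof.
move=> hA hC.
have key : pmul px (pmul py (pmul (pmul T gregD) logx)) =
           pmul px (pmul py (pmul (pmul (pmul A (psub C pone)) gregD) logx)).
  rewrite TUV.
  transitivity (padd (pmul (pmul px logx) (pmul gregD (pmul py U)))
                     (pmul (pmul py gregD) (pmul (pmul px Sp) (pmul g2 logx)))); first ring.
  rewrite yU xS g2L.
  transitivity (padd (pmul (pmul px logx) (psub (pmul G gregD) (pmul py (pmul logx gregD))))
      (pmul py (pmul (psub (pmul G gregD) (pmul px (pmul logy gregD))) (psub logx px)))); first ring.
  rewrite hG.
  transitivity (pmul logx (pmul (pmul A gregD) (psub (pmul (pmul px py) C) (pmul px py)))); last ring.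
  rewrite hA hC /gregN /numA /numB /gregD; ring.
exact: (@cancel_D _ _ (@cancel_Lx _ _ (@cancel_y _ _ (@cancel_x _ _ key)))).
Qed.

End Gfacts.

Lemma A_sym A : pmul A gregD = numA -> psw A = A.
Proof.
move=> hA; apply: cancel_D; rewrite hA.
have sD : psw gregD = psub logy logx by [].
transitivity (psub pzero (pmul (psw A) (psw gregD))); first by rewrite sD /gregD; ring.
rewrite -psw_mul hA /numA psw_sub !psw_mul psw_x psw_y psw_logx psw_logy; ring.
Qed.

Lemma C_sym C : pmul (pmul px py) C = numB -> psw C = C.
Proof.
move=> hC; apply: cancel_x; apply: cancel_y.
transitivity (psw (pmul (pmul px py) C)); first by rewrite !psw_mul psw_x psw_y; ring.
rewrite hC; transitivity numB; last by rewrite -hC; ring.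
rewrite /numB psw_add !psw_mul psw_x psw_y psw_logx psw_logy; ring.
Qed.

Theorem lemma4p5 :
  (exists G : ps, peq (pmul G gregD) gregN) /\
  (exists A : ps, peq (pmul A gregD) numA) /\
  (exists C : ps, peq (pmul (pmul px py) C) numB) /\
  forall G A C : ps,
    peq (pmul G gregD) gregN ->
    peq (pmul A gregD) numA ->
    peq (pmul (pmul px py) C) numB ->
    (forall m : nat, (1 <= m)%N ->
        Gtilde G m 1%N = G m 1%N /\ G m 1%N = (-1) ^+ (m - 1) / m%:R) /\
    peq (fun m n => if (1 <= m)%N && (1 <= n)%N then Gtilde G m n.+1 else 0)
        (pmul A (psub C pone)) /\
    (forall m n : nat, (1 <= m)%N -> (2 <= n)%N ->
        Gtilde G m n = Gtilde G (n - 1) (m + 1)).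
Proof.
split; first exact: G_ex.
split; first exact: A_ex.
split; first exact: C_ex.
move=> G A C /peqE hG /peqE hA /peqE hC.
have TE := @T_eq G hG A C hA hC.
split.
  move=> m hm; split.
    rewrite /Gtilde big1 ?addr0 // => j _; by rewrite (@G_0j G hG) mul0r.
  rewrite (@G_i1 G hG) /lcoef; case: m hm => [|m] //= _.
  by rewrite subn1.
split.
  by move=> i j; rewrite -TE.
move=> m [|[|n]] hm hn //.
have sW : psw (pmul A (psub C pone)) = pmul A (psub C pone).
  by rewrite psw_mul psw_sub psw_one (@A_sym A hA) (@C_sym C hC).
have h1 : T G m n.+1 = T G n.+1 m.
  by rewrite TE -{1}sW.
rewrite /T hm /= in h1.
by rewrite subn1 addn1 /=.
Qed.
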